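(* For every $\alpha\in(0,1)$ and every set of $m$ statistical queries $\mathcal{Q}$ over a universe $U$ of size $N$ with query matrix $Q\in[0,1]^{m\times N}$, there exists \[ s=\frac5\alpha\cdot\mathrm{hdisc}^*\left(Q,\frac{32\ln m}{\alpha^2}\right)=O\left(\frac{\log m}{\alpha}\cdot\mathrm{hdisc}^*\left(Q,\frac1{\alpha^2}\right)\right) \] such that for every dataset $x\in U^*$ whose rows are all distinct, there exists a dataset $y\in U^*$ of size at most $s$ such that $\|\mathcal{Q}(x)-\mathcal{Q}(y)\|_\infty\le\frac98\alpha$.
   Context: A statistical query is $q:U\to\mathbb{R}$ with $q(x)=\frac1{|x|}\sum_i q(x_i)$ for a dataset $x\in U^*$ (a finite sequence over $U$); $\mathcal{Q}(x)=(q_1(x),\ldots,q_m(x))$; the query matrix has $i$-th row $(q_i(u))_{u\in U}$. For an $m\times N$ matrix $Q$, $Q^*$ is the $(m+1)\times N$ matrix obtained by appending the all-ones row, $Q^*_S$ its submatrix of columns in $S$, and $\mathrm{hdisc}^*(Q,w)=\max_{S\subseteq[N],|S|\le w}\min_{z\in\{\pm1\}^S}\|Q^*_Sz\|_\infty$. *)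

(* Defs.v *)
From HB Require Import structures.
From mathcomp Require Import all_boot all_order all_algebra.
From mathcomp Require Import all_classical all_reals all_analysis.
Set Implicit Arguments. Unset Strict Implicit. Unset Printing Implicit Defensive.
Import Order.TTheory GRing.Theory Num.Theory.
Local Open Scope ring_scope.

(* Universe U is identified with 'I_N (|U| = N); the m queries are the rows
   of the query matrix Q : 'M[R]_(m, N), i.e. q_i(u) = Q i u. *)

(* sign vector restricted to S, encoded by a boolean function *)
Definition sgn (R : realType) (b : bool) : R := if b then 1 else -1.

(* ||Q^*_S z||_oo : max over the m rows of Q plus the all-ones row *)
Definition signed_norm (R : realType) (m N : nat) (Q : 'M[R]_(m, N))
    (S : {set 'I_N}) (z : {ffun 'I_N -> bool}) : R :=
  Num.max `|\sum_(u in S) sgn R (z u)|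
          (\big[Num.max/0]_(i < m) `|\sum_(u in S) Q i u * sgn R (z u)|).

(* min over z in {+-1}^S of ||Q^*_S z||_oo  (min over a finite nonempty set;
   the seed value is itself one of the candidates) *)
Definition disc_star (R : realType) (m N : nat) (Q : 'M[R]_(m, N))
    (S : {set 'I_N}) : R :=
  \big[Num.min/signed_norm Q S [ffun=> true]]_(z : {ffun 'I_N -> bool})
     signed_norm Q S z.

Definition hdisc_star (R : realType) (m N : nat) (Q : 'M[R]_(m, N)) (w : R) : R :=
  \big[Num.max/0]_(S : {set 'I_N} | (#|S|%:R <= w)) disc_star Q S.

Definition query_ans (R : realType) (m N : nat) (Q : 'M[R]_(m, N))
    (i : 'I_m) (x : seq 'I_N) : R :=
  (size x)%:R^-1 * \sum_(u <- x) Q i u.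

(* Main.v *)
Require Import Defs.
From HB Require Import structures.
From mathcomp Require Import all_boot all_order all_algebra.
From mathcomp Require Import all_classical all_reals all_analysis.
From mathcomp Require Import ring lra zify.
Import Order.TTheory GRing.Theory Num.Theory.
Local Open Scope ring_scope.

Lemma sum_seq_count (R : realType) (T : finType) (s : seq T) (F : T -> R) :
  \sum_(v <- s) F v = \sum_u (count_mem u s)%:R * F u.
Proof.
elim: s => [|a s IH].
  by rewrite big_nil big1 // => u _; rewrite mul0r.
rewrite big_cons IH /=.
under [RHS]eq_bigr do rewrite natrD mulrDl.
rewrite big_split /=; congr (_ + _).
rewrite (bigD1 a) //= eqxx mul1r big1 ?addr0 // => u /negbTE.
by rewrite eq_sym => ->; rewrite mul0r.
Qed.

Definition mkseq_c {N : nat} (c : 'I_N -> nat) : seq 'I_N :=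
  flatten [seq nseq (c u) u | u <- enum 'I_N].

Lemma count_mkseq (N : nat) (c : 'I_N -> nat) u :
  count_mem u (mkseq_c c) = c u.
Proof.
rewrite /mkseq_c count_flatten -map_comp sumnE big_map.
under eq_bigr do rewrite /= count_nseq.
rewrite big_enum /= (bigD1 u) //= eqxx mul1n big1 ?addn0 // => v /negbTE.
by rewrite eq_sym => ->.
Qed.

Lemma size_countR (R : realType) (T : finType) (s : seq T) :
  (size s)%:R = \sum_u (count_mem u s)%:R :> R.
Proof.
rewrite -sum1_size natr_sum sum_seq_count.
by apply: eq_bigr => u _; rewrite mulr1.
Qed.

Set Implicit Arguments. Unset Strict Implicit.

Lemma disc_attained (R : realType) (m N : nat) (Q : 'M[R]_(m, N)) (S : {set 'I_N}) :
  exists z, disc_star Q S = signed_norm Q S z.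
Proof.
rewrite /disc_star; elim/big_rec: _ => [|z0 v _ [z ->]]; first by exists [ffun=> true].
by case: (leP (signed_norm Q S z0) (signed_norm Q S z)) => _; [exists z0 | exists z].
Qed.

Lemma hdisc_ge (R : realType) (m N : nat) (Q : 'M[R]_(m, N)) (w : R) (S : {set 'I_N}) :
  #|S|%:R <= w -> disc_star Q S <= hdisc_star Q w.
Proof. by move=> hS; rewrite /hdisc_star; apply: (le_bigmax_cond _ (fun S => disc_star Q S)). Qed.

Lemma hdisc_col (R : realType) (m N : nat) (Q : 'M[R]_(m, N)) (w : R) (S : {set 'I_N}) :
  #|S|%:R <= w -> exists z : {ffun 'I_N -> bool},
   `|\sum_(u in S) sgn R (z u)| <= hdisc_star Q w /\
   forall i, `|\sum_(u in S) Q i u * sgn R (z u)| <= hdisc_star Q w.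
Proof.
move=> hS; have [z hz] := disc_attained Q S.
have := hdisc_ge Q hS; rewrite hz /signed_norm ge_max => /andP[h1 h2].
exists z; split => // i; apply: le_trans h2.
exact: (le_bigmax _ (fun i => `|\sum_(u in S) Q i u * sgn R (z u)|)).
Qed.

Lemma disc1 (R : realType) (m N : nat) (Q : 'M[R]_(m, N)) u0 :
  1 <= disc_star Q [set u0].
Proof.
have h z : 1 <= signed_norm Q [set u0] z.
  rewrite /signed_norm le_max big_set1 /sgn; case: (z u0).
    by rewrite normr1 lexx.
  by rewrite normrN normr1 lexx.
by rewrite /disc_star; apply: le_bigmin => // z _; exact: h.
Qed.


Lemma halve_arith (R : realType) (n sq n' sq' t d D : R) :
  0 < n -> 0 <= sq <= n -> 0 <= t <= D -> `|d| <= D ->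
  2 * n' = n + t -> 2 * sq' = sq + d ->
  `|sq / n - sq' / n'| <= D / n'.
Proof.
move=> n0 /andP[sq0 sqn] /andP[t0 tD] dD hn hs.
have n'0 : 0 < n' by lra.
have -> : sq / n - sq' / n' = (sq * t - d * n) / (2 * n * n').
  have -> : sq' = (sq + d) / 2 by rewrite -hs; field.
  have en : n' = (n + t) / 2 by rewrite -hn; field.
  rewrite en; field.
  by apply/andP; split; rewrite gt_eqF //; lra.
rewrite normrM (ger0_norm (_ : 0 <= (2 * n * n')^-1)); last by rewrite invr_ge0; nra.
rewrite ler_pdivrMr; last by nra.
have h1 : `|sq * t - d * n| <= sq * t + `|d| * n.
  apply: (le_trans (ler_normB _ _)).
  rewrite !normrM (ger0_norm sq0) (ger0_norm t0) (ger0_norm (ltW n0)) //.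
have e : D / n' * (2 * n * n') = 2 * n * D by field; rewrite gt_eqF.
rewrite e; apply: (le_trans h1); nra.
Qed.


Definition szc (R : realType) (N : nat) (c : 'I_N -> nat) : R := \sum_u (c u)%:R.
Definition smc (R : realType) (m N : nat) (Q : 'M[R]_(m, N)) i (c : 'I_N -> nat) : R :=
  \sum_u (c u)%:R * Q i u.

Lemma smc_bound (R : realType) (m N : nat) (Q : 'M[R]_(m, N)) i c :
  (forall i u, 0 <= Q i u <= 1) -> 0 <= smc Q i c <= szc R c.
Proof.
move=> HQ; apply/andP; split.
  by apply: sumr_ge0 => u _; apply: mulr_ge0 => //; case/andP: (HQ i u).
apply: ler_sum => u _; case/andP: (HQ i u) => _ h.
by rewrite -{2}(mulr1 (c u)%:R) ler_wpM2l.
Qed.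

Lemma halve (R : realType) (m N : nat) (Q : 'M[R]_(m, N)) (w : R) (c : 'I_N -> nat) :
  (forall i u, 0 <= Q i u <= 1) -> 0 < szc R c -> szc R c <= w ->
  exists c' : 'I_N -> nat, exists t : R, 0 <= t <= hdisc_star Q w /\
    2 * szc R c' = szc R c + t /\
    forall i, `|smc Q i c / szc R c - smc Q i c' / szc R c'| <= hdisc_star Q w / szc R c'.
Proof.
move=> HQ c0 cw; set D := hdisc_star Q w.
pose S := [set u | odd (c u)].
have hS : #|S|%:R <= w.
  apply: le_trans cw; rewrite /szc -sum1_card natr_sum big_mkcond /=.
  apply: ler_sum => u _; rewrite inE; case: (boolP (odd (c u))) => // hu.
  by rewrite ler1n; case: (c u) hu.
have [z [ht hd]] := hdisc_col Q hS.
pose dl u : R := if odd (c u) then sgn R (z u) else 0.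
have sumS (F : 'I_N -> R) : \sum_(u in S) F u * sgn R (z u) = \sum_u dl u * F u.
  rewrite big_mkcond /=; apply: eq_bigr => u _; rewrite inE /dl.
  by case: (odd (c u)); rewrite ?mul0r // mulrC.
pose c1 u := ((c u)./2 + (odd (c u) && z u))%N.
pose c2 u := ((c u)./2 + (odd (c u) && ~~ z u))%N.
have e1 u : (c1 u)%:R + (c2 u)%:R = (c u)%:R :> R.
  rewrite -natrD /c1 /c2; congr (_%:R).
  have hc := odd_double_half (c u); rewrite -addnn in hc.
  by case: (odd (c u)) hc; case: (z u) => /= hc; lia.
have e2 u : (c1 u)%:R - (c2 u)%:R = dl u :> R.
  rewrite /c1 /c2 /dl /sgn; case: (odd (c u)); case: (z u) => /=;
   rewrite ?addn0 ?addn1 ?natrD; lra.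
set t := \sum_u dl u.
have ht' : `|t| <= D.
  have -> : t = \sum_(u in S) 1 * sgn R (z u).
    by rewrite sumS /t; apply: eq_bigr => u _; rewrite mulr1.
  by under eq_bigr do rewrite mul1r.
have hd' i : `|\sum_u dl u * Q i u| <= D by rewrite -sumS; exact: hd.
have sz1 : szc R c1 + szc R c2 = szc R c by rewrite /szc -big_split; apply: eq_bigr => u _; exact: e1.
have sz2 : szc R c1 - szc R c2 = t by rewrite /szc -sumrB; apply: eq_bigr => u _; exact: e2.
have sm1 i : smc Q i c1 + smc Q i c2 = smc Q i c.
  by rewrite /smc -big_split; apply: eq_bigr => u _; rewrite -e1 mulrDl.
have sm2 i : smc Q i c1 - smc Q i c2 = \sum_u dl u * Q i u.
  by rewrite /smc -sumrB; apply: eq_bigr => u _; by rewrite -e2 mulrBl.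
have [t0|t0] := leP 0 t.
  exists c1, t; split; first by rewrite t0 /=; exact: le_trans (ler_norm _) ht'.
  split; first lra.
  move=> i; apply: (@halve_arith R (szc R c) (smc Q i c) (szc R c1) (smc Q i c1) t
     (\sum_u dl u * Q i u) D c0 (smc_bound _ _ HQ) _ (hd' i)).
  - by rewrite t0; exact: le_trans (ler_norm _) ht'.
  - lra.
  - have := sm1 i; have := sm2 i; lra.
exists c2, (- t); split.
  by rewrite oppr_ge0 (ltW t0) /=; apply: le_trans ht'; rewrite -normrN; exact: ler_norm.
split; first lra.
move=> i; apply: (@halve_arith R (szc R c) (smc Q i c) (szc R c2) (smc Q i c2) (- t)
     (- \sum_u dl u * Q i u) D c0 (smc_bound _ _ HQ)).
- by rewrite oppr_ge0 (ltW t0) /=; apply: le_trans ht'; rewrite -normrN; exact: ler_norm.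
- by rewrite normrN; exact: hd'.
- lra.
- have := sm1 i; have := sm2 i; lra.
Qed.


Lemma phase2 (R : realType) (m N : nat) (Q : 'M[R]_(m, N)) (w a : R) :
  (forall i u, 0 <= Q i u <= 1) -> 0 < a -> forall (f : nat) (c : 'I_N -> nat),
  2 ^+ f * a <= szc R c <= 2 ^+ f * a + hdisc_star Q w ->
  2 ^+ f * a + hdisc_star Q w <= w ->
  exists c' : 'I_N -> nat, a <= szc R c' <= a + hdisc_star Q w /\
    forall i, `|smc Q i c / szc R c - smc Q i c' / szc R c'| <=
       (2 - 2 / 2 ^+ f) * (hdisc_star Q w / a).
Proof.
move=> HQ a0; set D := hdisc_star Q w; elim=> [|f IH] c.
  rewrite expr0 !mul1r => hc _; exists c; split => // i.
  by rewrite subrr normr0 invr1 mulr1 subrr mul0r.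
rewrite exprS -mulrA => /andP[hc1 hc2] hw.
have P0 : 0 < 2 ^+ f :> R by apply: exprn_gt0.
have Pa : 0 < 2 ^+ f * a by apply: mulr_gt0.
have hp : 0 < szc R c by lra.
have hq : szc R c <= w by lra.
have [c1 [t [/andP[t0 tD] [e1 err1]]]] := @halve R m N Q w c HQ hp hq.
rewrite -/D in tD err1.
have h1 : 2 ^+ f * a <= szc R c1 <= 2 ^+ f * a + D by apply/andP; split; lra.
have h2 : 2 ^+ f * a + D <= w by lra.
have [c' [hc' err2]] := IH c1 h1 h2.
exists c'; split => // i.
apply: (le_trans (ler_distD (smc Q i c1 / szc R c1) _ _)).
have s1 : 2 ^+ f * a <= szc R c1 by lra.
have hD : D / szc R c1 <= D / (2 ^+ f * a).
  by rewrite ler_wpM2l ?lef_pV2 ?posrE //; nra.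
apply: (le_trans (lerD (le_trans (err1 i) hD) (err2 i))).
rewrite le_eqVlt; apply/orP; left; apply/eqP; field.
by rewrite gt_eqF // gt_eqF.
Qed.


Lemma exp_quad (R : realType) (t : R) : t <= 1/2 -> expR t <= 1 + t + 2 * t ^+ 2.
Proof.
move=> ht.
have h1 : 1 - t <= expR (- t) by have := expR_ge1Dx (- t); rewrite -[1 - t]/(1 + - t).
have h0 : 0 < 1 - t by lra.
have -> : expR t = (expR (- t))^-1 by rewrite expRN invrK.
apply: (le_trans (_ : _ <= (1 - t)^-1)); first by rewrite lef_pV2 ?posrE ?expR_gt0.
rewrite -[X in X <= _]mul1r ler_pdivrMr //; nra.
Qed.

Lemma sumseq_const (R : realType) (T : Type) (s : seq T) (A : R) :
  \sum_(v <- s) A = (size s)%:R * A.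
Proof.
elim: s => [|a s IH]; first by rewrite big_nil mul0r.
by rewrite big_cons IH /= -{1}(mul1r A) -mulrDl -natr1 addrC.
Qed.

Lemma exists_le_avg (R : realType) (T : Type) (s : seq T) (G : T -> R) (A : R) :
  (0 < size s)%N -> \sum_(v <- s) G v <= (size s)%:R * A -> exists v, G v <= A.
Proof.
move=> s0 hs; apply/not_existsP => hn.
have hlt v : A < G v by rewrite ltNge; apply/negP => /(fun h => hn v h).
case: s s0 hs => [//|a s] _; rewrite big_cons /= -natr1 mulrDl mul1r.
have : \sum_(v <- s) A <= \sum_(v <- s) G v by apply: ler_sum => v _; exact: ltW.
rewrite sumseq_const; have := hlt a; lra.
Qed.

Lemma mgf_bound (R : realType) (T : Type) (x : seq T) (q : T -> R) (sg mu : R) :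
  (0 < size x)%N -> (forall u, 0 <= q u <= 1) -> `|sg| <= 1/2 ->
  mu = (size x)%:R^-1 * \sum_(u <- x) q u ->
  \sum_(u <- x) expR (sg * (q u - mu)) <= (size x)%:R * (1 + sg ^+ 2 / 2).
Proof.
move=> x0 hq hsg emu.
set n := (size x)%:R.
have n0 : 0 < n by rewrite ltr0n.
set Sq := \sum_(u <- x) q u.
have eS : n * mu = Sq by rewrite emu mulrA mulfV ?mul1r // gt_eqF.
have Sq0 : 0 <= Sq by apply: sumr_ge0 => u _; case/andP: (hq u).
have Sqn : Sq <= n.
  rewrite /n -(mulr1 (size x)%:R) -sumseq_const; apply: ler_sum => u _.
  by case/andP: (hq u).
have mu0 : 0 <= mu by rewrite emu mulr_ge0 // invr_ge0 ltW.
have mu1 : mu <= 1 by rewrite emu ler_pdivrMl // mulr1.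
have step u : expR (sg * (q u - mu)) <=
     1 + sg * (q u - mu) + 2 * sg ^+ 2 * (q u - 2 * mu * q u + mu ^+ 2).
  apply: (le_trans (exp_quad _)).
    have hy : `|q u - mu| <= 1.
      by rewrite ler_norml; case/andP: (hq u) => h1 h2; apply/andP; split; lra.
    apply: (le_trans (ler_norm _)); rewrite normrM.
    have := normr_ge0 sg; have := normr_ge0 (q u - mu); nra.
  case/andP: (hq u) => h1 h2.
  have : 0 <= sg ^+ 2 * (q u - q u ^+ 2).
    by apply: mulr_ge0; [apply: sqr_ge0 | nra].
  nra.
apply: (le_trans (ler_sum _ (fun u _ => step u))).
rewrite !big_split /= sumseq_const -mulr_sumr -mulr_sumr.
have -> : \sum_(u <- x) (q u - mu) = 0.
  by rewrite sumrB sumseq_const -/n -/Sq eS subrr.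
rewrite !big_split /= -!mulr_suml sumseq_const -/Sq -/n.
have -> : \sum_(i <- x) - (2 * mu * q i) = - (2 * mu * Sq) by rewrite sumrN -mulr_sumr.
rewrite -eS.
have : 0 <= sg ^+ 2 * n * (mu - 1/2) ^+ 2.
  by apply: mulr_ge0; [apply: mulr_ge0; [apply: sqr_ge0 | exact: ltW] | apply: sqr_ge0].
nra.
Qed.


Lemma phase1 (R : realType) (m N : nat) (Q : 'M[R]_(m, N)) (x : seq 'I_N) (lam : R) (k : nat) :
  (forall i u, 0 <= Q i u <= 1) -> (0 < size x)%N -> 0 < lam <= 1/2 -> (0 < k)%N -> (0 < m)%N ->
  exists y : seq 'I_N, size y = k /\ forall i,
    `|query_ans Q i x - query_ans Q i y| <= ln (2 * m%:R) / (lam * k%:R) + lam / 2.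
Proof.
move=> HQ x0 /andP[l0 l1] k0 m0.
have [mu emu] : exists mu : 'I_m -> R, mu = fun i => query_ans Q i x by eexists.
pose Y i (y : seq 'I_N) := \sum_(v <- y) (Q i v - mu i).
pose Psi y := \sum_i (expR (lam * Y i y) + expR (- (lam * Y i y))).
pose B := 1 + lam ^+ 2 / 2.
have B0 : 0 <= B by rewrite /B; have := sqr_ge0 lam; lra.
have Psi0 y : 0 <= Psi y.
  by apply: sumr_ge0 => i _; apply: addr_ge0; exact: expR_ge0.
have greedy j : exists y, size y = j /\ Psi y <= 2 * m%:R * B ^+ j.
  elim: j => [|j [y [hy hP]]].
    exists [::]; split => //; rewrite /Psi /Y /=.
    under eq_bigr do rewrite big_nil mulr0 oppr0 expR0.
    by rewrite expr0 mulr1 sumr_const cardT size_enum_ord -[X in X <= _]mulr_natr; lra.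
  have avg : \sum_(u <- x) Psi (u :: y) <= (size x)%:R * (B * Psi y).
    rewrite /Psi exchange_big /= mulr_sumr mulr_sumr; apply: ler_sum => i _.
    rewrite /Y /=.
    under eq_bigr => u _ do rewrite big_cons mulrDr opprD expRD expRD -mulNr.
    rewrite big_split /= -!mulr_suml mulrDr mulrDr.
    apply: lerD; rewrite mulrA; apply: ler_wpM2r; try exact: expR_ge0.
      apply: (mgf_bound x0 (fun u => HQ i u)); last by rewrite emu.
      by rewrite ger0_norm; [lra | exact: ltW].
    rewrite /B -(sqrrN lam); apply: (mgf_bound x0 (fun u => HQ i u)); last by rewrite emu.
    by rewrite normrN ger0_norm; [lra | exact: ltW].
  have [u hu] := exists_le_avg x0 avg.
  exists (u :: y); split; first by rewrite /= hy.
  apply: (le_trans hu); rewrite exprS mulrCA; apply: ler_wpM2l => //.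
have [y [hy hP]] := greedy k.
exists y; split => // i.
have kpos : 0 < k%:R :> R by rewrite ltr0n.
have e1 : expR (lam * `|Y i y|) <= Psi y.
  apply: le_trans (_ : expR (lam * Y i y) + expR (- (lam * Y i y)) <= _).
    case: (lerP 0 (Y i y)) => hY.
      by rewrite ger0_norm // lerDl expR_ge0.
    by rewrite ltr0_norm // mulrN lerDr expR_ge0.
  rewrite /Psi (bigD1 i) //= lerDl; apply: sumr_ge0 => j _.
  by apply: addr_ge0; exact: expR_ge0.
have e2 : B ^+ k <= expR (k%:R * (lam ^+ 2 / 2)).
  rewrite expRM_natl; apply: lerXn2r.
  - by rewrite nnegrE.
  - by rewrite nnegrE expR_ge0.
  - by rewrite /B; exact: expR_ge1Dx.
have m2 : 0 < 2 * m%:R :> R by rewrite mulr_gt0 // ltr0n.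
have e3 : lam * `|Y i y| <= ln (2 * m%:R) + k%:R * (lam ^+ 2 / 2).
  rewrite -ler_expR expRD lnK ?posrE //.
  apply: (le_trans e1); apply: (le_trans hP); apply: ler_wpM2l; first exact: ltW.
  exact: e2.
have e4 : query_ans Q i x - query_ans Q i y = - (Y i y / k%:R).
  rewrite /Y /query_ans sumrB sumseq_const emu /query_ans hy.
  by field; rewrite !gt_eqF // ltr0n.
rewrite e4 normrN normrM (ger0_norm (_ : 0 <= k%:R^-1)); last by rewrite invr_ge0 ltW.
rewrite ler_pdivrMr //.
have -> : (ln (2 * m%:R) / (lam * k%:R) + lam / 2) * k%:R =
   (ln (2 * m%:R) + k%:R * (lam ^+ 2 / 2)) / lam.
  by field; rewrite !gt_eqF.
by rewrite ler_pdivlMr // mulrC.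
Qed.


Lemma ln2_ge (R : realType) : 1 / 2 <= ln (2 : R).
Proof.
have h := @le_ln1Dx R (- (1/2)) ltac:(lra).
have e : (1 + - (1 / 2) : R) = 2^-1 by field.
rewrite e lnV ?posrE // in h; lra.
Qed.

Lemma nb (R : realType) (al L k w l2m : R) :
  0 < al < 1 -> 1/2 <= L -> w * al ^+ 2 = 32 * L -> l2m <= 2 * L -> (w - 1) / 2 <= k ->
  l2m / (al / 2 * k) + al / 2 / 2 <= 31 / 60 * al.
Proof.
move=> /andP[a0 a1] hL hw hl hk.
have a2 : 0 < al ^+ 2 by apply: exprn_gt0.
have a21 : al ^+ 2 < 1 by rewrite expr2; nra.
have w16 : 16 <= w by nra.
have k15 : 15 / 32 * w <= k by lra.
have k0 : 0 < k by lra.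
have hak : 15 * L <= al ^+ 2 * k.
  have : al ^+ 2 * (15 / 32 * w) <= al ^+ 2 * k by rewrite ler_wpM2l // ltW.
  lra.
suff : l2m / (al / 2 * k) <= 4 / 15 * al by lra.
rewrite ler_pdivrMr; last by apply: mulr_gt0 => //; lra.
rewrite expr2 in hak; nra.
Qed.

Unset Implicit Arguments. Set Strict Implicit.

Lemma qa_count (R : realType) (m N : nat) (Q : 'M[R]_(m, N)) i (y : seq 'I_N) :
  query_ans Q i y = smc Q i (fun u => count_mem u y) / szc R (fun u => count_mem u y).
Proof. by rewrite /query_ans /smc /szc -size_countR -sum_seq_count mulrC. Qed.

Lemma qa_mk (R : realType) (m N : nat) (Q : 'M[R]_(m, N)) i (c : 'I_N -> nat) :
  query_ans Q i (mkseq_c c) = smc Q i c / szc R c.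
Proof.
rewrite qa_count /smc /szc; congr (_ / _); apply: eq_bigr => u _; by rewrite count_mkseq.
Qed.

Lemma size_mk (R : realType) (N : nat) (c : 'I_N -> nat) :
  (size (mkseq_c c))%:R = szc R c.
Proof. by rewrite size_countR /szc; apply: eq_bigr => u _; rewrite count_mkseq. Qed.

Theorem corollary6p9 (R : realType) (m N : nat) (Q : 'M[R]_(m, N))
  (alpha : R) :
  0 < alpha < 1 ->
  (1 < m)%N ->
  (forall i u, 0 <= Q i u <= 1) ->
  let s := 5 / alpha * hdisc_star Q (32 * ln (m%:R) / alpha ^+ 2) in
  forall x : seq 'I_N, x != [::] -> uniq x ->
  exists y : seq 'I_N, y != [::] /\ (size y)%:R <= s /\
    forall i : 'I_m, `|query_ans Q i x - query_ans Q i y| <= 9 / 8 * alpha.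
Proof.
move=> /andP[a0 a1] m1 HQ s x xn _.
have [u0 _] : exists u0 : 'I_N, u0 \in x by case: x xn => // u x' _; exists u; rewrite inE eqxx.
have x0 : (0 < size x)%N by case: x xn.
set L := ln (m%:R : R).
have m0 : (0 : R) < m%:R.
  by rewrite ltr0n; lia.
have hL : 1 / 2 <= L.
  apply: (le_trans (ln2_ge R)); rewrite /L ler_ln ?posrE ?m0 //.
  by rewrite ler_nat.
have l2m : ln (2 * m%:R : R) <= 2 * L.
  rewrite lnM ?posrE // -/L; have := ln2_ge R.
  have : ln (2 : R) <= L by rewrite /L ler_ln ?posrE ?m0 // ler_nat.
  lra.
set w := 32 * L / alpha ^+ 2.
have a2 : 0 < alpha ^+ 2 by apply: exprn_gt0.
have hw : w * alpha ^+ 2 = 32 * L by rewrite /w; field; rewrite gt_eqF.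
have a21 : alpha ^+ 2 < 1 by rewrite expr2; nra.
have w16 : 16 <= w by nra.
set D := hdisc_star Q w.
have D1 : 1 <= D.
  apply: (le_trans (disc1 Q u0)); apply: hdisc_ge.
  by rewrite cards1; lra.
have es : s = 5 / alpha * D by [].
set a := D * (5 / alpha - 1).
have ia : 1 < 5 / alpha by rewrite ltr_pdivlMr //; lra.
have apos : 0 < a by rewrite /a mulr_gt0 //; lra.
have sa : s = a + D by rewrite es /a; field; rewrite gt_eqF.
have lam0 : 0 < alpha / 2 <= 1 / 2 by apply/andP; split; lra.
have m0' : (0 < m)%N by apply: ltnW.
have [ws|sw] := leP w s.
  pose k := Num.truncn w.
  have [hk1 hk2] : k%:R <= w /\ w < k.+1%:R.
    have w0 : 0 <= w by lra.
    by have /andP[] := truncn_itv w0.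
  have k0 : (0 < k)%N.
    rewrite lt0n; apply/negP => /eqP k0.
    by move: hk2; rewrite k0; lra.
  have [y [hy err]] := @phase1 R m N Q x (alpha / 2) k HQ x0 lam0 k0 m0'.
  exists y; split; first by apply/eqP => y0; move: hy k0; rewrite y0 /= => <-.
  split; first by rewrite hy; lra.
  move=> i; apply: (le_trans (err i)).
  have := @nb R alpha L k%:R w (ln (2 * m%:R)) (ltac:(apply/andP; split; lra)) hL hw l2m.
  rewrite -natr1 in hk2; move=> /(_ ltac:(lra)); lra.
pose P := fun f : nat => (2 ^+ f * a + D <= w).
have P0 : P 0%N by rewrite /P expr0 mul1r -sa; exact: ltW sw.
have Pub : forall f, P f -> (f <= Num.truncn (w / a))%N.
  move=> f hf; rewrite truncn_ge_nat; last by apply: divr_ge0; lra.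
  rewrite ler_pdivlMr //; apply: le_trans hf.
  have h : (f%:R : R) <= 2 ^+ f.
    by rewrite -natrX ler_nat; apply: ltnW; apply: ltn_expl.
  apply: (@le_trans _ _ (2 ^+ f * a)); first by apply: ler_wpM2r => //; exact: ltW.
  by rewrite lerDl; lra.
case: (ex_maxnP (ex_intro P 0%N P0) Pub) => f Pf fmax.
have nP : w < 2 * (2 ^+ f * a) + D.
  rewrite ltNge; apply/negP => h.
  have := fmax f.+1; rewrite /P exprS -mulrA h => /(_ isT); by rewrite ltnn.
rewrite /P in Pf.
have P2f : 0 < 2 ^+ f * a by apply: mulr_gt0 => //; apply: exprn_gt0.
pose k := Num.truncn (2 ^+ f * a + D).
have [hk1 hk2] : k%:R <= 2 ^+ f * a + D /\ 2 ^+ f * a + D < k.+1%:R.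
  have w0 : 0 <= 2 ^+ f * a + D by lra.
  by have /andP[] := truncn_itv w0.
rewrite -natr1 in hk2.
have k0 : (0 < k)%N.
  rewrite lt0n; apply/negP => /eqP k0.
  by move: hk2; rewrite k0; lra.
have [y0 [hy err]] := @phase1 R m N Q x (alpha / 2) k HQ x0 lam0 k0 m0'.
pose c0 := fun u => count_mem u y0.
have sz0 : szc R c0 = k%:R by rewrite /szc -size_countR hy.
have hc0 : 2 ^+ f * a <= szc R c0 <= 2 ^+ f * a + D by rewrite sz0; apply/andP; split; lra.
have [c' [hc' err2]] := @phase2 R m N Q w a HQ apos f c0 hc0 Pf.
exists (mkseq_c c'); split.
  apply/eqP => y0e; have := @size_mk R N c'; rewrite y0e /= => e.
  by move: hc'; rewrite -e; lra.
split; first by rewrite size_mk sa; case/andP: hc'.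
move=> i.
have Da : D / a <= alpha / 4.
  have -> : D / a = alpha / (5 - alpha).
    by rewrite /a; field; rewrite !gt_eqF //; lra.
  rewrite ler_pdivrMr; last lra.
  clear -a0 a1; nra.
have f2 : 0 <= 2 / 2 ^+ f :> R by apply: divr_ge0 => //; apply: exprn_ge0.
have Da0 : 0 <= D / a by apply: divr_ge0; lra.
have e2 := err2 i; rewrite -/D in e2.
have e1 := err i.
rewrite qa_mk.
have e3 : `|query_ans Q i x - smc Q i c' / szc R c'| <=
   `|query_ans Q i x - query_ans Q i y0| + `|query_ans Q i y0 - smc Q i c' / szc R c'|.
  exact: ler_distD.
rewrite (@qa_count R m N Q i y0) -/c0 in e1 e3.
have := @nb R alpha L k%:R w (ln (2 * m%:R)) (ltac:(apply/andP; split; lra)) hL hw l2m.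
move=> /(_ ltac:(lra)) hnb.
have : (2 - 2 / 2 ^+ f) * (D / a) <= 2 * (alpha / 4).
  have := mulr_ge0 f2 Da0; clear -Da; lra.
lra.
Qed.
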